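(* Let $(\mathcal{X},\mathcal{Y},W)$ be a discrete memoryless channel with finite alphabets and $|\mathcal{X}|\le3$. Then the channel is non-redundant if and only if for all $p,q\in\mathcal{P}(\mathcal{X})$, $W\circ p=W\circ q$ implies $p=q$.
   Context: $\mathcal{P}(\mathcal{X})$ is the set of probability distributions on $\mathcal{X}$; $W_x=W(\cdot|x)$ and $(W\circ p)(y)=\sum_{x}p(x)W(y|x)$. The channel is non-redundant if there exists $\eta>0$ such that for all $x\in\mathcal{X}$ and all $p\in\mathcal{P}(\mathcal{X})$ with $p(x)=0$, $\|W_x-W\circ p\|_1\ge\eta$. *)

(* Defs.v *)
From mathcomp Require Import all_boot all_order all_algebra.
Set Implicit Arguments. Unset Strict Implicit. Unset Printing Implicit Defensive.
Import Order.TTheory GRing.Theory Num.Theory.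
Local Open Scope ring_scope.

Definition is_distr (R : realFieldType) (T : finType) (p : T -> R) : Prop :=
  (forall t, 0 <= p t) /\ \sum_(t : T) p t = 1.

(* A discrete memoryless channel W(y|x) = W x y: every row W_x is a distribution. *)
Definition is_channel (R : realFieldType) (X Y : finType) (W : X -> Y -> R) : Prop :=
  forall x, is_distr (W x).

Definition chan_out (R : realFieldType) (X Y : finType) (W : X -> Y -> R)
  (p : X -> R) : Y -> R := fun y => \sum_(x : X) p x * W x y.

Definition l1dist (R : realFieldType) (T : finType) (f g : T -> R) : R :=
  \sum_(t : T) `|f t - g t|.

Definition non_redundant (R : realFieldType) (X Y : finType) (W : X -> Y -> R) : Prop :=
  exists eta : R, 0 < eta /\
    forall (x : X) (p : X -> R), is_distr p -> p x = 0 ->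
      eta <= l1dist (W x) (chan_out W p).

(* Main.v *)
Require Import Defs.
From mathcomp Require Import all_boot all_order all_algebra.
From mathcomp Require Import reals.
From mathcomp Require Import ring lra zify.
From Stdlib Require Import FunctionalExtensionality.
Import Order.TTheory GRing.Theory Num.Theory.
Local Open Scope ring_scope.

Lemma sum_ev (R : realType) (X : finType) (F0 : X -> R) :
  \sum_(i < #|X|) F0 (enum_val i) = \sum_x F0 x.
Proof.
rewrite (reindex (@enum_val X predT)) //.
by exists enum_rank => i _; rewrite ?enum_valK ?enum_rankK.
Qed.

Lemma ker_triv (R : realType) (X Y : finType) (W : X -> Y -> R) :
  is_channel W ->
  (forall p q : X -> R, is_distr p -> is_distr q ->
      chan_out W p = chan_out W q -> p = q) ->
  forall d : X -> R, (forall y, \sum_x d x * W x y = 0) -> forall x, d x = 0.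
Proof.
move=> HW Hinj d Hd.
have Hs : \sum_x d x = 0.
  transitivity (\sum_x \sum_y d x * W x y).
    by apply: eq_bigr => x _; rewrite -mulr_sumr (proj2 (HW x)) mulr1.
  by rewrite exchange_big /= big1.
pose dp x := if 0 <= d x then d x else 0.
pose dn x := if 0 <= d x then 0 else - d x.
have dE x : d x = dp x - dn x.
  by rewrite /dp /dn; case: ifP => h; rewrite ?subr0 ?sub0r ?opprK.
have dp0 x : 0 <= dp x by rewrite /dp; case: ifP.
have dn0 x : 0 <= dn x.
  by rewrite /dn; case: ifP => // /negbT; rewrite -ltNge oppr_ge0 => /ltW.
have Hsn : \sum_x dp x = \sum_x dn x.
  apply/eqP; rewrite -subr_eq0 -sumrB; apply/eqP.
  by rewrite -[RHS]Hs; apply: eq_bigr => x _; rewrite dE.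
set s := \sum_x dp x in Hsn.
have s0 : 0 <= s by apply: sumr_ge0.
case: (eqVneq s 0) => [sE|sn0] x.
  have h1 : dp x = 0.
    by apply: (psumr_eq0P (P := predT) (fun i _ => dp0 i) sE).
  have h2 : dn x = 0.
    by apply: (psumr_eq0P (P := predT) (fun i _ => dn0 i) (etrans (esym Hsn) sE)).
  by rewrite dE h1 h2 subrr.
have spos : 0 < s by rewrite lt_def sn0 s0.
pose p x := dp x / s.
pose q x := dn x / s.
have Hpq : p = q.
  apply: Hinj.
  - split; first by move=> t; rewrite /p divr_ge0.
    by rewrite /p -mulr_suml mulfV.
  - split; first by move=> t; rewrite /q divr_ge0.
    by rewrite /q -mulr_suml Hsn mulfV // -Hsn.
  - rewrite /chan_out /p /q; apply: functional_extensionality => y.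
    apply/eqP; rewrite -subr_eq0 -sumrB; apply/eqP.
    transitivity (s^-1 * \sum_x d x * W x y); last by rewrite Hd mulr0.
    rewrite mulr_sumr; apply: eq_bigr => z _.
    by rewrite dE; field; rewrite sn0.
have := congr1 (fun f => f x * s) Hpq; rewrite /p /q /= !mulfVK //.
by rewrite dE => ->; rewrite subrr.
Qed.

Lemma le_sum1 (R : realType) (I : finType) (F : I -> R) i :
  (forall j, 0 <= F j) -> F i <= \sum_j F j.
Proof. by move=> h; rewrite (bigD1 i) //= lerDl sumr_ge0. Qed.

Lemma nonred_of_inj (R : realType) (X Y : finType) (W : X -> Y -> R) :
  is_channel W ->
  (forall p q : X -> R, is_distr p -> is_distr q ->
      chan_out W p = chan_out W q -> p = q) ->
  non_redundant W.
Proof.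
move=> HW Hinj.
pose A : 'M[R]_(#|X|, #|Y|) := \matrix_(i, j) W (enum_val i) (enum_val j).
have AE (v : 'rV[R]_#|X|) y :
    (v *m A) 0 (enum_rank y) = \sum_x v 0 (enum_rank x) * W x y.
  rewrite !mxE -(@sum_ev _ _ (fun x => v 0 (enum_rank x) * W x y)).
  by apply: eq_bigr => i _; rewrite !mxE enum_rankK enum_valK.
have rfA : row_free A.
  rewrite -kermx_eq0; apply/rowV0P => v /sub_kermxP vA.
  apply/rowP => i; rewrite mxE.
  have := @ker_triv _ _ _ W HW Hinj (fun x => v 0 (enum_rank x)).
  move=> /(_ _ (enum_val i)); rewrite enum_valK; apply => y.
  by rewrite -AE vA mxE.
have [B AB] := row_freeP rfA.
pose K := 1 + \sum_j \sum_i `|B j i|.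
have Kpos : 0 < K.
  by rewrite /K ltr_pwDl // sumr_ge0 // => j _; rewrite sumr_ge0.
have BK j i : `|B j i| <= K.
  apply: (le_trans (@le_sum1 _ _ (fun i => `|B j i|) i _)) => // .
  apply: (le_trans (@le_sum1 _ _ (fun j => \sum_i `|B j i|) j _)).
    by move=> k; rewrite sumr_ge0.
  by rewrite /K lerDr.
exists K^-1; split; first by rewrite invr_gt0.
move=> x p Hp px0.
pose v : 'rV[R]_#|X| := \row_i ((enum_val i == x)%:R - p (enum_val i)).
have vAB : v = v *m A *m B by rewrite -mulmxA AB mulmx1.
have := congr1 (fun M : 'rV_#|X| => M 0 (enum_rank x)) vAB.
rewrite /= [in X in X = _]mxE enum_rankK eqxx px0 subr0 mxE => H1.
have cE j : (v *m A) 0 j = W x (enum_val j) - chan_out W p (enum_val j).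
  rewrite -{1}(enum_valK j) AE /chan_out.
  under eq_bigr do rewrite mxE enum_rankK mulrBl.
  rewrite sumrB (bigD1 x) //= eqxx mul1r big1 ?addr0 // => x' /negbTE ->.
  by rewrite mul0r.
rewrite -[K^-1]mul1r ler_pdivrMr // (_ : 1 = \sum_j (v *m A) 0 j * B j (enum_rank x)) //.
apply: (le_trans (ler_norm _)).
apply: (le_trans (ler_norm_sum _ _ _)).
rewrite /l1dist -(@sum_ev _ _ (fun t => `|W x t - chan_out W p t|)) mulr_suml.
apply: ler_sum => j _; rewrite cE normrM.
by apply: ler_wpM2l => //.
Qed.

Lemma one_pos (R : realType) (X : finType) (d : X -> R) :
  #|[set z | 0 < d z]| = 1%N ->
  exists x0, d x0 != 0 /\ forall y, y != x0 -> d y * d x0 <= 0.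
Proof.
move/eqP/cards1P => [x0 Px0]; exists x0.
have : x0 \in [set z | 0 < d z] by rewrite Px0 set11.
rewrite inE => hx0; split; first by rewrite gt_eqF.
move=> y yx0.
have : y \notin [set z | 0 < d z] by rewrite Px0 in_set1.
rewrite inE -leNgt => hy; nra.
Qed.

Lemma key (R : realType) (X : finType) (d : X -> R) x1 :
  (#|X| <= 3)%N -> \sum_x d x = 0 -> d x1 != 0 ->
  exists x0, d x0 != 0 /\ forall y, y != x0 -> d y * d x0 <= 0.
Proof.
move=> HX Hs Hx1.
pose P := [set z | 0 < d z].
pose N := [set z | d z < 0].
have PN : (#|P| + #|N| <= 3)%N.
  rewrite -cardsUI (_ : P :&: N = set0) ?cards0 ?addn0.
    by apply: leq_trans HX; apply: max_card.
  apply/setP => z; rewrite !inE; apply/negbTE; rewrite negb_and -leNgt.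
  by case: (lerP (d z) 0) => h //=; rewrite -leNgt ltW.
have allnn (f : X -> R) : \sum_x f x = 0 -> (forall x, 0 <= f x) -> f x1 = 0.
  move=> hs hf; exact: (psumr_eq0P (P := predT) (fun i _ => hf i) hs).
have P0 : (0 < #|P|)%N.
  rewrite card_gt0; apply/set0Pn.
  case: (boolP [exists z, 0 < d z]) => [/existsP[z hz]|/existsPn hn].
    by exists z; rewrite inE.
  have : (fun x => - d x) x1 = 0.
    apply: (allnn (fun x => - d x)); first by rewrite sumrN Hs oppr0.
    by move=> x; rewrite oppr_ge0 leNgt hn.
  by move/eqP; rewrite oppr_eq0 (negbTE Hx1).
have N0 : (0 < #|N|)%N.
  rewrite card_gt0; apply/set0Pn.
  case: (boolP [exists z, d z < 0]) => [/existsP[z hz]|/existsPn hn].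
    by exists z; rewrite inE.
  have : d x1 = 0.
    by apply: (allnn d) => // x; rewrite leNgt hn.
  by move/eqP; rewrite (negbTE Hx1).
have [h|h] : #|P| = 1%N \/ #|N| = 1%N by move: PN P0 N0; clear; lia.
  exact: one_pos.
have e : [set z | 0 < - d z] = N by apply/setP => z; rewrite !inE oppr_gt0.
have [x0 [h1 h2]] := @one_pos _ _ (fun z => - d z) (etrans (congr1 (fun S : {set X} => #|S|) e) h).
exists x0; split; first by rewrite -oppr_eq0.
by move=> y /h2; rewrite mulrNN.
Qed.

Lemma sum_delta (R : realType) (X : finType) (F : X -> R) x0 :
  \sum_y (y == x0)%:R * F y = F x0.
Proof.
rewrite (bigD1 x0) //= eqxx mul1r big1 ?addr0 // => y /negbTE ->.
by rewrite mul0r.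
Qed.

Lemma inj_of_nonred (R : realType) (X Y : finType) (W : X -> Y -> R) :
  (#|X| <= 3)%N -> non_redundant W ->
  (forall p q : X -> R, is_distr p -> is_distr q ->
      chan_out W p = chan_out W q -> p = q).
Proof.
move=> HX [eta [eta0 Hnr]] p q Hp Hq Hpq.
apply: functional_extensionality => x1.
case: (eqVneq (p x1 - q x1) 0) => [e|hne].
  by apply/eqP; rewrite -subr_eq0 e.
pose d x := p x - q x.
have Hs : \sum_x d x = 0 by rewrite sumrB (proj2 Hp) (proj2 Hq) subrr.
have [x0 [h0 hy]] := @key _ _ d x1 HX Hs hne.
pose r y := - (d y / d x0) + (y == x0)%:R.
have Hr : is_distr r.
  split.
    move=> y; rewrite /r; case: (eqVneq y x0) => [->|ne].
      by rewrite mulfV // addNr.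
    rewrite addr0 oppr_ge0.
    have -> : d y / d x0 = (d y * d x0) * (d x0)^-1 ^+ 2 by field.
    by apply: mulr_le0_ge0; [exact: hy | exact: sqr_ge0].
  rewrite /r big_split /= sumrN -mulr_suml Hs mul0r oppr0 add0r.
  by rewrite -[RHS](@sum_delta _ _ (fun _ => (1:R)) x0); apply: eq_bigr => y _; rewrite mulr1.
have rx0 : r x0 = 0 by rewrite /r eqxx mulfV // addNr.
have := Hnr x0 r Hr rx0.
have -> : chan_out W r = W x0.
  apply: functional_extensionality => z; rewrite /chan_out /r.
  under eq_bigr do rewrite mulrDl.
  rewrite big_split /= (@sum_delta _ _ (fun i => W i z)).
  have -> : \sum_i - (d i / d x0) * W i z = - ((\sum_i d i * W i z) / d x0).
    rewrite mulr_suml -sumrN; apply: eq_bigr => i _; by field.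
  have -> : \sum_i d i * W i z = 0.
    have := congr1 (fun f => f z) Hpq; rewrite /chan_out /d /= => e.
    under eq_bigr do rewrite mulrBl.
    by rewrite sumrB e subrr.
  by rewrite mul0r oppr0 add0r.
rewrite /l1dist big1 => [|t _]; last by rewrite subrr normr0.
by rewrite leNgt eta0.
Qed.

Theorem proposition2 (R : realType) (X Y : finType) (W : X -> Y -> R) :
  is_channel W -> (#|X| <= 3)%N ->
  (non_redundant W <->
   (forall p q : X -> R, is_distr p -> is_distr q ->
      chan_out W p = chan_out W q -> p = q)).
Proof.
move=> HW HX; split.
  exact: inj_of_nonred.
exact: nonred_of_inj.
Qed.
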